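(* Let $n\ge1$. Every $n$-normal operator $T\in\mathcal{L}(\mathcal{H})$ with closed range is $n$-EP.
   Context: $\mathcal{H}$ is a Hilbert space, $\mathcal{L}(\mathcal{H})$ the bounded operators on it. $T$ is $n$-normal if $T^nT^*=T^*T^n$. For $T$ with closed range, $T^\dagger$ is its Moore–Penrose inverse (unique solution of $TT^\dagger T=T$, $T^\dagger TT^\dagger=T^\dagger$, $(T^\dagger T)^*=T^\dagger T$, $(TT^\dagger)^*=TT^\dagger$). $T$ is $n$-EP if $T$ has closed range and $T^nT^\dagger=T^\dagger T^n$. *)

(* Defs.v *)
From HB Require Import structures.
From mathcomp Require Import all_boot all_order all_algebra.
From mathcomp Require Import complex.
From mathcomp Require Import reals.
Set Implicit Arguments. Unset Strict Implicit. Unset Printing Implicit Defensive.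
Import Order.TTheory GRing.Theory Num.Theory.
Local Open Scope ring_scope.

Section Hilbert.
Variables (R : realType) (H : lmodType R[i]) (ip : H -> H -> R[i]).

Definition inner_product_axioms : Prop :=
  [/\ (forall (a : R[i]) (x y z : H), ip (a *: x + y) z = a * ip x z + ip y z),
      (forall x y : H, ip x y = (ip y x)^*),
      (forall x : H, 0 <= ip x x) &
      (forall x : H, ip x x = 0 -> x = 0)].

Definition hnorm (x : H) : R := Num.sqrt (complex.Re (ip x x)).

Definition hcvg (u : nat -> H) (l : H) : Prop :=
  forall e : R, 0 < e -> exists N : nat, forall k, (N <= k)%N -> hnorm (u k - l) < e.

Definition hcauchy (u : nat -> H) : Prop :=
  forall e : R, 0 < e -> exists N : nat,
    forall k m, (N <= k)%N -> (N <= m)%N -> hnorm (u k - u m) < e.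

Definition is_hilbert : Prop :=
  inner_product_axioms /\ (forall u, hcauchy u -> exists l, hcvg u l).

Definition bounded_op (T : H -> H) : Prop :=
  (forall (a : R[i]) (x y : H), T (a *: x + y) = a *: T x + T y) /\
  (exists M : R, forall x, hnorm (T x) <= M * hnorm x).

Definition is_adjoint (T Ts : H -> H) : Prop :=
  bounded_op Ts /\ forall x y, ip (T x) y = ip x (Ts y).

Definition selfadjoint (P : H -> H) : Prop :=
  forall x y, ip (P x) y = ip x (P y).

Definition closed_range (T : H -> H) : Prop :=
  forall (u : nat -> H) (y : H), hcvg (fun k => T (u k)) y -> exists x, T x = y.

Definition is_MP_inverse (T S : H -> H) : Prop :=
  [/\ bounded_op S,
      T \o S \o T =1 T,
      S \o T \o S =1 S,
      selfadjoint (S \o T) &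
      selfadjoint (T \o S)].

Definition opow (T : H -> H) (n : nat) : H -> H := iter n T.

(* T is n-normal: T^n T^* = T^* T^n (Ts is the adjoint of T) *)
Definition n_normal (n : nat) (T Ts : H -> H) : Prop :=
  opow T n \o Ts =1 Ts \o opow T n.

(* T is n-EP: closed range and T^n T^+ = T^+ T^n, T^+ the (unique)
   Moore--Penrose inverse *)
Definition n_EP (n : nat) (T : H -> H) : Prop :=
  closed_range T /\
  forall S, is_MP_inverse T S -> opow T n \o S =1 S \o opow T n.

End Hilbert.

(* Main.v *)
Require Import Defs.
From HB Require Import structures.
From mathcomp Require Import all_boot all_order all_algebra.
From mathcomp Require Import complex.
From mathcomp Require Import reals.
Local Open Scope ring_scope.
Import GRing.Theory Num.Theory.
Set Implicit Arguments.

Section Aux.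
Variables (R : realType) (H : lmodType R[i]) (ip : H -> H -> R[i]).
Hypothesis ipax : inner_product_axioms ip.

Definition linr (f : H -> H) := forall (a : R[i]) (x y : H), f (a *: x + y) = a *: f x + f y.

Lemma ipBl x y z : ip (x - y) z = ip x z - ip y z.
Proof.
case: ipax => L _ _ _.
by rewrite addrC -scaleN1r L mulN1r addrC.
Qed.

Lemma ipC x y : ip x y = (ip y x)^*.
Proof. by case: ipax. Qed.

Lemma ip0r x : ip x 0 = 0.
Proof. by rewrite ipC -(subrr x) ipBl subrr conjC0. Qed.

Lemma eqL a b : (forall z, ip a z = ip b z) -> a = b.
Proof.
move=> h; case: ipax => _ _ _ D.
apply/eqP; rewrite -subr_eq0; apply/eqP; apply: D.
by rewrite ipBl h subrr.
Qed.

Lemma eqR a b : (forall z, ip z a = ip z b) -> a = b.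
Proof. by move=> h; apply: eqL => z; rewrite ipC h -ipC. Qed.

Lemma linr0 f : linr f -> f 0 = 0.
Proof.
move=> L; have := L 1 0 0; rewrite !scale1r addr0 => h.
by apply: (@addrI _ (f 0)); rewrite addr0 -h.
Qed.

Lemma linrB f : linr f -> forall x y, f (x - y) = f x - f y.
Proof.
move=> L x y; by rewrite addrC -scaleN1r L scaleN1r addrC.
Qed.

Lemma lin_iter f n : linr f -> linr (iter n f).
Proof.
move=> L; elim: n => [|n IH] a x y //=.
by rewrite IH L.
Qed.

Lemma commute_range (E B Bs : H -> H) :
  (forall x y, ip (B x) y = ip x (Bs y)) ->
  (forall x y, ip (E x) y = ip x (E y)) ->
  (forall x, E (B (E x)) = B (E x)) ->
  (forall x, E (Bs (E x)) = Bs (E x)) ->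
  forall x, E (B x) = B (E x).
Proof.
move=> adj sa h1 h2 x; apply: eqL => y.
by rewrite sa adj -h2 -sa -adj -sa h1.
Qed.

Lemma commute_ker (E B Bs : H -> H) :
  linr E -> linr B -> linr Bs ->
  (forall x y, ip (B x) y = ip x (Bs y)) ->
  (forall x y, ip (E x) y = ip x (E y)) ->
  (forall x, E (E x) = E x) ->
  (forall k, E k = 0 -> E (B k) = 0) ->
  (forall k, E k = 0 -> E (Bs k) = 0) ->
  forall x, E (B x) = B (E x).
Proof.
move=> LE LB LBs adj sa idem kB kBs.
have kE x : E (x - E x) = 0 by rewrite linrB // idem subrr.
have c1 (F : H -> H) : linr F -> (forall k, E k = 0 -> E (F k) = 0) ->
    forall x, E (F x) = E (F (E x)).
  move=> LF kF x; apply/eqP; rewrite -subr_eq0 -linrB // -linrB //.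
  by rewrite kF // kE.
move=> x; rewrite (c1 B) //; symmetry; apply: eqL => y.
rewrite adj ipC -sa (c1 Bs) // -ipC -sa -adj -sa.
by [].
Qed.

End Aux.
Arguments linr {R H}.

Theorem mainTheorem9 (R : realType) (H : lmodType R[i]) (ip : H -> H -> R[i])
    (hH : is_hilbert ip) (n : nat) (hn : (1 <= n)%N)
    (T Ts : H -> H) (hT : bounded_op ip T) (hTs : is_adjoint ip T Ts)
    (hnormal : n_normal n T Ts) (hcr : closed_range ip T) :
  n_EP ip n T.
Proof.
split => // S [[LS _] TST STS saQ saP].
case: hH => ipax _.
case: hT => LT _; case: hTs => [[LTs _] adjT].
rewrite /n_normal /opow in hnormal *.
set A := iter n T; set B := iter n Ts.
have LA : linr A by apply: lin_iter.
have LB : linr B by apply: lin_iter.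
have adjA x y : ip (A x) y = ip x (B y).
  rewrite /A /B; clear hn hnormal A B LA LB; elim: n x y => [|m IH] x y //=.
  by rewrite adjT IH -iterSr.
have AT x : A (T x) = T (A x) by rewrite /A -iterSr iterS.
have adjT' x w : ip x (T w) = ip (Ts x) w.
  by rewrite (ipC ipax) adjT -(ipC ipax).
have TB x : T (B x) = B (T x).
  apply: (eqR ipax) => z; rewrite adjT' -adjA.
  have -> : A (Ts z) = Ts (A z) by apply: hnormal.
  by rewrite -adjT' adjA.
have TST' x : T (S (T x)) = T x by apply: TST.
have STS' x : S (T (S x)) = S x by apply: STS.
have saP' x y : ip (T (S x)) y = ip x (T (S y)) by apply: saP.
have saQ' x y : ip (S (T x)) y = ip x (S (T y)) by apply: saQ.
have PA x : T (S (A x)) = A (T (S x)).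
  apply: (@commute_range _ _ ip ipax (fun x => T (S x)) A B) => //= y.
    by rewrite AT TST'.
  by rewrite -TB TST'.
have LQ : linr (fun x => S (T x)) by move=> a u v; rewrite LT LS.
have kQ k : S (T k) = 0 -> T k = 0 by move=> h; rewrite -TST' h linr0.
have QA x : S (T (A x)) = A (S (T x)).
  apply: (@commute_ker _ _ ip ipax (fun x => S (T x)) A B) => //=.
  - by move=> k hk; rewrite -AT kQ // linr0 // linr0.
  - by move=> k hk; rewrite TB kQ // linr0 // linr0.
move=> x /=.
suff key : A (S x) = S (A x) by [].
apply/eqP; rewrite eq_sym -subr_eq0; apply/eqP.
set d := S (A x) - A (S x).
have Td : T d = 0.
  by rewrite /d (linrB LT) PA AT subrr.
have -> : d = S (T d).
  rewrite /d (linrB LT) (linrB LS).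
  by rewrite (QA (S x)) (STS' (A x)) (STS' x).
by rewrite Td linr0.
Qed.
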